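(* Let $p\neq q$ be primes, $G_1$ a finite abelian group of order $p^e$ and $G_2$ a finite abelian group of order $q^f$. Let $R_i=\mathbf{Z}[G_i]$, $S_i$ the integral closure of $R_i$ in $\mathbf{Q}[G_i]$, and $I_i=\{s\in S_i: sS_i\subseteq R_i\}$ the conductor of $S_i$ into $R_i$. Regarding all tensor products over $\mathbf{Z}$ as subgroups of $S_1\otimes S_2$, one has $$I_1\otimes I_2=(R_1\otimes I_2)\cap(I_1\otimes R_2).$$ *)

(* Defs.v *)
From HB Require Import structures.
From mathcomp Require Import all_boot all_order all_algebra all_fingroup.
Set Implicit Arguments. Unset Strict Implicit. Unset Printing Implicit Defensive.
Import Order.TTheory GRing.Theory Num.Theory.
Local Open Scope ring_scope.

(* The rational group algebra Q[G] of a finite group G (the whole carrier of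
   a finGroupType gT), represented as coefficient functions G -> Q. *)
Definition QG (gT : finGroupType) := {ffun gT -> rat}.

Definition gmul (gT : finGroupType) (a b : {ffun gT -> rat}) : {ffun gT -> rat} :=
  [ffun g => \sum_(h : gT) a h * b (h^-1 * g)%g].

Definition gunit (gT : finGroupType) : {ffun gT -> rat} :=
  [ffun g => (g == 1%g)%:R].

Definition gpow (gT : finGroupType) (a : {ffun gT -> rat}) (n : nat) :=
  iter n (gmul a) (gunit gT).

Definition inZG (gT : finGroupType) (a : {ffun gT -> rat}) : Prop :=
  forall g, a g \is a Num.int.

Definition inS (gT : finGroupType) (x : {ffun gT -> rat}) : Prop :=
  exists (n : nat) (r : nat -> {ffun gT -> rat}),
    (forall i, inZG (r i)) /\
    gpow x n + \sum_(i < n) gmul (r i) (gpow x i) = 0.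

Definition inI (gT : finGroupType) (s : {ffun gT -> rat}) : Prop :=
  inS s /\ forall t, inS t -> inZG (gmul s t).

(* Elementary tensor a ⊗ b, viewed inside Q[G1] ⊗ Q[G2] = Q^(G1 x G2). *)
Definition etens (gT1 gT2 : finGroupType) (a : {ffun gT1 -> rat})
  (b : {ffun gT2 -> rat}) : {ffun gT1 * gT2 -> rat} :=
  [ffun g => a g.1 * b g.2].

(* Image of A ⊗_Z B in S1 ⊗ S2 ⊆ Q[G1] ⊗ Q[G2]: the additive subgroup
   generated by the elementary tensors a ⊗ b (A, B being subgroups, this is
   the set of finite sums of such). *)
Definition tens (gT1 gT2 : finGroupType) (A : {ffun gT1 -> rat} -> Prop)
  (B : {ffun gT2 -> rat} -> Prop) (x : {ffun gT1 * gT2 -> rat}) : Prop :=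
  exists s : seq ({ffun gT1 -> rat} * {ffun gT2 -> rat}),
    (forall ab, ab \in s -> A ab.1 /\ B ab.2) /\
    x = \sum_(ab <- s) etens ab.1 ab.2.

(* Main.v *)
Require Import Defs.
From HB Require Import structures.
From mathcomp Require Import all_boot all_order all_algebra all_fingroup all_field all_character.
Set Implicit Arguments. Unset Strict Implicit. Unset Printing Implicit Defensive.
Import Order.TTheory GRing.Theory Num.Theory.
Local Open Scope ring_scope.
Lemma Aint_root (n : nat) (c : nat -> algC) (x : algC) :
  (forall i, c i \in Aint) -> x ^+ n + \sum_(i < n) c i * x ^+ i = 0 -> x \in Aint.
Proof.
move=> cA Ex.
have XA : {subset [seq c i | i <- iota 0 n] <= Aint}.
  by move=> _ /mapP[i _ ->].
have [S [[S1 _ SM] sXS] [[m Y] sYS YP]] := Aint_subring_exists XA.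
rewrite /= in sYS YP.
pose Ys := [seq y * x ^+ k | y <- (Y : seq algC), k <- iota 0 n].
pose T := Cint_span Ys.
have TP := Cint_spanP (in_tuple Ys).
have small k s : (k < n)%N -> s \in S -> s * x ^+ k \in T.
  move=> kn /YP[a ->]; rewrite mulr_suml rpred_sum // => i _.
  rewrite mulrzAl rpredMz // mem_Cint_span //; apply/allpairsP.
  exists ((Y : seq algC)`_i, k) => /=; split => //.
    by apply: mem_nth; rewrite size_tuple.
  by rewrite mem_iota.
have cS i : (i < n)%N -> c i \in S.
  by move=> lin; apply: sXS; apply/mapP; exists i => //; rewrite mem_iota.
have K m0 : forall s, s \in S -> s * x ^+ m0 \in T.
  elim/ltn_ind: m0 => m0 IH s Ss.
  have [mn|nm] := ltnP m0 n; first exact: small.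
  have -> : x ^+ m0 = x ^+ (m0 - n) * x ^+ n by rewrite -exprD subnK.
  have -> : x ^+ n = - \sum_(i < n) c i * x ^+ i.
    by apply/eqP; rewrite -subr_eq0 opprK Ex.
  rewrite !mulrN rpredN !mulr_sumr rpred_sum // => i _.
  rewrite (mulrCA (x ^+ _) (c i)) -exprD mulrA.
  idtac.
  apply: IH; last by apply: SM => //; apply: cS.
  by rewrite -ltn_subRL subnBA // addnC addnK.
have mulT : mulr_closed T.
  split; first by rewrite -[1]mulr1 -(expr0 x) K.
  move=> u v /TP[a ->] /TP[b ->].
  rewrite mulr_suml rpred_sum // => i _; rewrite mulr_sumr rpred_sum // => j _.
  rewrite mulrzAl mulrzAr rpredMz // rpredMz //.
  have gen z : z \in Ys -> exists2 y, y \in S & exists k, z = y * x ^+ k.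
    by case/allpairsP => -[y k] /= [yY _ ->]; exists y; [apply: sYS | exists k].
  have [y Sy [k ->]] := gen _ (mem_nth 0 (ltn_ord j)).
  have [y' Sy' [k' ->]] := gen _ (mem_nth 0 (ltn_ord i)).
  by rewrite mulrACA -exprD K // SM.
apply: (fin_Csubring_Aint mulT TP).
by rewrite -[x]mul1r -(expr1 x) K.
Qed.

Section Phi.
Variable gT : finGroupType.
Hypothesis abG : abelian [set: gT].
Let G := [set: gT]%G.

Definition phi (i : Iirr G) (a : {ffun gT -> rat}) : algC :=
  \sum_(g : gT) ratr (a g) * 'chi[G]_i g.

Lemma linchi i : 'chi[G]_i \is a linear_char.
Proof. by move/char_abelianP: abG. Qed.

Lemma phiD i a b : phi i (a + b) = phi i a + phi i b.
Proof. by rewrite /phi -big_split; apply: eq_bigr => g _; rewrite ffunE rmorphD mulrDl. Qed.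

Lemma phi0 i : phi i 0 = 0.
Proof. by rewrite /phi big1 // => g _; rewrite ffunE rmorph0 mul0r. Qed.

Lemma phi_sum i n (F : 'I_n -> {ffun gT -> rat}) :
  phi i (\sum_(k < n) F k) = \sum_(k < n) phi i (F k).
Proof. exact: (big_morph _ (phiD i) (phi0 i)). Qed.

Lemma phiM i a b : phi i (gmul a b) = phi i a * phi i b.
Proof.
rewrite /phi /gmul mulr_suml.
under eq_bigr do rewrite ffunE rmorph_sum mulr_suml.
rewrite exchange_big /=; apply: eq_bigr => h _.
rewrite mulr_sumr (reindex_inj (mulgI h)) /=; apply: eq_bigr => g _.
rewrite mulKg rmorphM lin_charM ?in_setT //; last exact: linchi.
by rewrite mulrACA.
Qed.

Lemma phi1 i : phi i (gunit gT) = 1.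
Proof.
rewrite /phi (bigD1 1%g) //= big1 ?addr0.
  by rewrite ffunE eqxx rmorph1 mul1r lin_char1 //; exact: linchi.
by move=> g /negPf g1; rewrite ffunE g1 rmorph0 mul0r.
Qed.

Lemma phiX i a k : phi i (gpow a k) = phi i a ^+ k.
Proof.
elim: k => [|k IH]; first by rewrite expr0 phi1.
by rewrite /gpow iterS -/(gpow a k) phiM IH exprS.
Qed.

Lemma phiZ i a : inZG a -> phi i a \in Aint.
Proof.
move=> Za; rewrite rpred_sum // => g _; rewrite rpredM ?Aint_irr //.
by apply: Aint_Cint; rewrite Cint_rat.
Qed.

Lemma phiS i s : inS s -> phi i s \in Aint.
Proof.
case=> n [r [Zr E]].
apply: (@Aint_root n (fun k => phi i (r k))); first by move=> k; apply: phiZ.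
transitivity (phi i (gpow s n + \sum_(i < n) gmul (r i) (gpow s i))); last first.
  by rewrite E phi0.
rewrite phiD phi_sum phiX.
by congr (_ + _); apply: eq_bigr => k _; rewrite phiM phiX.
Qed.

Lemma orth (s : {ffun gT -> rat}) g :
  \sum_i phi i s * ('chi[G]_i g)^* = ratr (#|gT|%:R * s g).
Proof.
rewrite /phi.
under eq_bigr do rewrite mulr_suml.
rewrite exchange_big /=.
under eq_bigr do under eq_bigr do rewrite -mulrA.
under eq_bigr do rewrite -mulr_sumr.
have cm (a b : gT) : commute a b.
  exact: (centsP abG a (in_setT a) b (in_setT b)).
have CG h : #|'C_G[h]%g| = #|gT|.
  by rewrite (setIidPl _) ?cardsT // sub_cent1 (subsetP abG h (in_setT h)).
rewrite (bigD1 g) //= [X in _ + X]big1 ?addr0.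
  rewrite second_orthogonality_relation ?in_setT // class_refl mulr1n CG.
  by rewrite rmorphM /= ratr_nat mulrC.
move=> h hg; rewrite second_orthogonality_relation ?in_setT //.
case: (boolP (h \in (g ^: G)%g)) => [/imsetP[y _ hy]|]; last by rewrite mulr0n mulr0.
by move: hg; rewrite hy conjgE (cm g y) mulKg eqxx.
Qed.

Lemma intS (s : {ffun gT -> rat}) : inS s -> forall g, (#|gT|%:R * s g) \is a Num.int.
Proof.
move=> Ss g; rewrite -Cint_rat; apply: Cint_rat_Aint; first exact: Crat_rat.
rewrite -orth rpred_sum // => i _; rewrite rpredM ?phiS //.
by rewrite -lin_charV_conj ?in_setT ?Aint_irr //; exact: linchi.
Qed.

End Phi.

Definition scl (T : finType) (c : rat) (a : {ffun T -> rat}) : {ffun T -> rat} :=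
  [ffun g => c * a g].

Lemma gmul1 (gT : finGroupType) (a : {ffun gT -> rat}) : gmul a (gunit gT) = a.
Proof.
apply/ffunP => g; rewrite ffunE (bigD1 g) //= big1 ?addr0.
  by rewrite ffunE mulVg eqxx mulr1.
by move=> h hg; rewrite ffunE -eq_mulVg1 (negPf hg) mulr0.
Qed.

Lemma inS_Z (gT : finGroupType) (a : {ffun gT -> rat}) : inZG a -> inS a.
Proof.
move=> Za; exists 1%N, (fun _ => - a); split.
  by move=> _ g; rewrite ffunE rpredN.
rewrite big_ord1 /gpow /= !gmul1.
apply/ffunP => g; rewrite !ffunE.
by rewrite subrr.
Qed.

Lemma inI_Z (gT : finGroupType) (a : {ffun gT -> rat}) : inI a -> inZG a.
Proof.
case=> _ H; rewrite -[a]gmul1; apply: H; apply: inS_Z => g.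
by rewrite ffunE; case: (_ == _).
Qed.

Lemma inI_scale (gT : finGroupType) (m : rat) (r : {ffun gT -> rat}) :
  abelian [set: gT] -> m \is a Num.int -> inZG r ->
  inI (scl (m * #|gT|%:R) r).
Proof.
move=> abG mZ Zr; split.
  by apply: inS_Z => g; rewrite ffunE !rpredM // rpred_nat.
move=> t St g; rewrite ffunE rpred_sum // => h _; rewrite ffunE.
rewrite (_ : m * #|gT|%:R * r h * t (h^-1 * g)%g = (m * r h) * (#|gT|%:R * t (h^-1 * g)%g)); last by rewrite mulrA [m * _ * r h]mulrAC.
by apply: rpredM; [apply: rpredM | exact: (intS abG St)].
Qed.

Lemma tensD (gT1 gT2 : finGroupType) A B (x y : {ffun gT1 * gT2 -> rat}) :
  tens A B x -> tens A B y -> tens A B (x + y).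
Proof.
move=> [s [Hs ->]] [s' [Hs' ->]]; exists (s ++ s'); split.
  by move=> ab; rewrite mem_cat => /orP[/Hs|/Hs'].
by rewrite big_cat.
Qed.

Lemma tens_scl1 (gT1 gT2 : finGroupType) (A A' : {ffun gT1 -> rat} -> Prop) B c
   (x : {ffun gT1 * gT2 -> rat}) :
  (forall a, A a -> A' (scl c a)) -> tens A B x -> tens A' B (scl c x).
Proof.
move=> AA [s [Hs ->]]; exists [seq (scl c ab.1, ab.2) | ab <- s]; split.
  by move=> _ /mapP[ab /Hs[Ha Hb] ->]; split => //; apply: AA.
apply/ffunP => g; rewrite big_map !ffunE !sum_ffunE mulr_sumr.
by apply: eq_bigr => ab _; rewrite !ffunE mulrA.
Qed.

Lemma tens_scl2 (gT1 gT2 : finGroupType) A (B B' : {ffun gT2 -> rat} -> Prop) c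
   (x : {ffun gT1 * gT2 -> rat}) :
  (forall b, B b -> B' (scl c b)) -> tens A B x -> tens A B' (scl c x).
Proof.
move=> BB [s [Hs ->]]; exists [seq (ab.1, scl c ab.2) | ab <- s]; split.
  by move=> _ /mapP[ab /Hs[Ha Hb] ->]; split => //; apply: BB.
apply/ffunP => g; rewrite big_map !ffunE !sum_ffunE mulr_sumr.
by apply: eq_bigr => ab _; rewrite !ffunE mulrCA.
Qed.

Lemma tens_mono (gT1 gT2 : finGroupType) (A A' : {ffun gT1 -> rat} -> Prop)
  (B B' : {ffun gT2 -> rat} -> Prop) x :
  (forall a, A a -> A' a) -> (forall b, B b -> B' b) -> tens A B x -> tens A' B' x.
Proof.
move=> AA BB [s [Hs ->]]; exists s; split => // ab /Hs[]; split; auto.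
Qed.

Theorem mainTheorem11 (p q e f : nat) (gT1 gT2 : finGroupType) :
  prime p -> prime q -> p != q ->
  abelian [set: gT1] -> #|gT1| = (p ^ e)%N ->
  abelian [set: gT2] -> #|gT2| = (q ^ f)%N ->
  forall x : {ffun gT1 * gT2 -> rat},
    tens (@inI gT1) (@inI gT2) x <->
    (tens (@inZG gT1) (@inI gT2) x /\ tens (@inI gT1) (@inZG gT2) x).
Proof.
move=> pp pq npq ab1 c1 ab2 c2 x; split.
  by move=> H; split; apply: tens_mono H => // a; apply: inI_Z.
case=> [H1 H2].
have cop : coprime (p ^ e) (q ^ f).
  by apply: coprimeXl; apply: coprimeXr; rewrite prime_coprime // dvdn_prime2.
have [u [v Euv]] := Bezoutz (p ^ e)%N (q ^ f)%N.
have Euv' : (u%:~R * (p ^ e)%:R + v%:~R * (q ^ f)%:R = 1 :> rat).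
  have := congr1 (fun z : int => z%:~R : rat) Euv.
  rewrite /gcdz /= (eqP cop) /= rmorphD !rmorphM /=.
  by rewrite -!pmulrn => ->; rewrite mulr1n.
have -> : x = scl (u%:~R * #|gT1|%:R) x + scl (v%:~R * #|gT2|%:R) x.
  by apply/ffunP => g; rewrite !ffunE -mulrDl c1 c2 Euv' mul1r.
apply: tensD.
  apply: tens_scl1 H1 => a Za; exact: inI_scale.
apply: tens_scl2 H2 => b Zb; exact: inI_scale.
Qed.
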